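(* Let $1\le k\le n$ be integers, let $M\in\mathbb{R}^{2n\times 2n}$ be symmetric positive definite, let $N=\operatorname{diag}(\nu_1,\ldots,\nu_k)$ with $0<\nu_1<\cdots<\nu_k$, and let $\tilde N=\operatorname{diag}(N,N)$. Consider the problem of minimizing $f(X)=\operatorname{tr}(\tilde N X^TMX)$ over $X\in\mathbb{R}^{2n\times 2k}$ subject to $X^TJ_{2n}X=J_{2k}$. Let $X_*$ be a critical point of this problem whose columns are associated with the symplectic eigenvalues $[d_{i_1},\ldots,d_{i_k}]$ of $M$, i.e., $X_*^TMX_*=\operatorname{diag}(D_{\mathcal I_k},D_{\mathcal I_k})$ with $D_{\mathcal I_k}=\operatorname{diag}(d_{i_1},\ldots,d_{i_k})$, and suppose these are not in nonincreasing order, i.e., there exist $1\le\alpha<\beta\le k$ with $d_{i_\alpha}<d_{i_\beta}$. Then $X_*$ is not a (local) minimizer of the problem, and therefore it is a saddle point.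
   Context: $J_{2m}=\begin{bmatrix}0 & I_m\\ -I_m & 0\end{bmatrix}$. The symplectic eigenvalues of $M$ are the positive numbers $d_1,\ldots,d_n$ such that $S^TMS=\operatorname{diag}(D,D)$, $D=\operatorname{diag}(d_1,\ldots,d_n)$, for some $S\in\mathbb{R}^{2n\times2n}$ with $S^TJ_{2n}S=J_{2n}$ (Williamson's theorem). A point $X_*$ is a critical point of the problem if $X_*^TJ_{2n}X_*=J_{2k}$ and there exists a skew-symmetric $L_*\in\mathbb{R}^{2k\times 2k}$ with $MX_*\tilde N=J_{2n}X_*L_*$. A saddle point is a critical point that is neither a local minimizer nor a local maximizer of $f$ on the feasible set $\{X: X^TJ_{2n}X=J_{2k}\}$. *)

(* Defs.v *)
From mathcomp Require Import all_boot all_order all_algebra.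
From mathcomp Require Import reals.
Set Implicit Arguments. Unset Strict Implicit. Unset Printing Implicit Defensive.
Import Order.TTheory GRing.Theory Num.Theory.
Local Open Scope ring_scope.

Section Defs.
Variable R : realType.

Definition Jmx (m : nat) : 'M[R]_(m + m) :=
  block_mx 0 1%:M (- 1%:M) 0.

Definition bdiag2 (m : nat) (A : 'M[R]_m) : 'M[R]_(m + m) := block_mx A 0 0 A.

Definition diagv (m : nat) (d : 'I_m -> R) : 'M[R]_m := diag_mx (\row_i d i).

Definition symmetric_mx (m : nat) (A : 'M[R]_m) : Prop := A^T = A.

Definition skew_mx (m : nat) (A : 'M[R]_m) : Prop := A^T = - A.

Definition posdef_mx (m : nat) (A : 'M[R]_m) : Prop :=
  symmetric_mx A /\ forall v : 'cV[R]_m, v != 0 -> 0 < (v^T *m A *m v) 0 0.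

Definition symplectic (m : nat) (S : 'M[R]_(m + m)) : Prop :=
  S^T *m Jmx m *m S = Jmx m.

(* Williamson: d_1..d_n are the symplectic eigenvalues of M
   (as a multiset; indexing d : 'I_n -> R) *)
Definition symplectic_eigenvalues (n : nat) (M : 'M[R]_(n + n)) (d : 'I_n -> R)
  : Prop :=
  (forall i, 0 < d i) /\
  exists S : 'M[R]_(n + n), symplectic S /\ S^T *m M *m S = bdiag2 (diagv d).

Definition feasible (n k : nat) (X : 'M[R]_(n + n, k + k)) : Prop :=
  X^T *m Jmx n *m X = Jmx k.

Definition fobj (n k : nat) (M : 'M[R]_(n + n)) (nu : 'I_k -> R)
  (X : 'M[R]_(n + n, k + k)) : R :=
  \tr (bdiag2 (diagv nu) *m X^T *m M *m X).

Definition critical_point (n k : nat) (M : 'M[R]_(n + n)) (nu : 'I_k -> R)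
  (X : 'M[R]_(n + n, k + k)) : Prop :=
  feasible X /\
  exists L : 'M[R]_(k + k), skew_mx L /\
    M *m X *m bdiag2 (diagv nu) = Jmx n *m X *m L.

(* local minimizer / maximizer of f on the feasible set; neighbourhoods are
   taken entrywise (all norms on a finite-dimensional space are equivalent) *)
Definition local_minimizer (n k : nat) (M : 'M[R]_(n + n)) (nu : 'I_k -> R)
  (X : 'M[R]_(n + n, k + k)) : Prop :=
  feasible X /\
  exists2 e : R, 0 < e & forall Y : 'M[R]_(n + n, k + k), feasible Y ->
    (forall i j, `|Y i j - X i j| < e) -> fobj M nu X <= fobj M nu Y.

Definition local_maximizer (n k : nat) (M : 'M[R]_(n + n)) (nu : 'I_k -> R)
  (X : 'M[R]_(n + n, k + k)) : Prop :=
  feasible X /\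
  exists2 e : R, 0 < e & forall Y : 'M[R]_(n + n, k + k), feasible Y ->
    (forall i j, `|Y i j - X i j| < e) -> fobj M nu Y <= fobj M nu X.

Definition saddle_point (n k : nat) (M : 'M[R]_(n + n)) (nu : 'I_k -> R)
  (X : 'M[R]_(n + n, k + k)) : Prop :=
  critical_point M nu X /\ ~ local_minimizer M nu X /\ ~ local_maximizer M nu X.

End Defs.

(* Main.v *)
Require Import Defs.
From mathcomp Require Import all_boot all_order all_algebra.
From mathcomp Require Import reals.
From mathcomp Require Import ring lra.
Import Order.TTheory GRing.Theory Num.Theory.
Local Open Scope ring_scope.
Set Implicit Arguments. Unset Strict Implicit.

Section P.
Variable R : realType.

Lemma sum2 (k : nat) (a b : 'I_k) (F : 'I_k -> R) (x y : R) : a != b ->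
  \sum_l F l * (if l == a then x else if l == b then y else 0) = F a * x + F b * y.
Proof.
move=> ab; rewrite (bigD1 a) //= eqxx (bigD1 b) 1?eq_sym //= (negbTE ab) eqxx.
rewrite big1 ?addr0 // => l /andP [la lb]; by rewrite (negbTE la) (negbTE lb) mulr0.
Qed.

Lemma sum1 (k : nat) (a : 'I_k) (F : 'I_k -> R) :
  \sum_l F l * (l == a)%:R = F a.
Proof.
rewrite (bigD1 a) //= eqxx mulr1 big1 ?addr0 // => l la; by rewrite (negbTE la) mulr0.
Qed.

Definition rotmx (k : nat) (a b : 'I_k) (c s : R) : 'M[R]_k := locked
  (\matrix_(l, i) (if i == a then (if l == a then c else if l == b then s else 0)
     else if i == b then (if l == a then -s else if l == b then c else 0)
     else (l == i)%:R)).

Lemma rotE k (a b : 'I_k) (c s : R) l i : rotmx a b c s l i =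
  (if i == a then (if l == a then c else if l == b then s else 0)
     else if i == b then (if l == a then -s else if l == b then c else 0)
     else (l == i)%:R).
Proof. by rewrite /rotmx -lock mxE. Qed.

Lemma colsum k (a b : 'I_k) c s (F : 'I_k -> R) i : a != b ->
  \sum_l F l * rotmx a b c s l i =
  if i == a then F a * c + F b * s else if i == b then F a * (- s) + F b * c
  else F i.
Proof.
move=> ab; under eq_bigr => l _ do rewrite rotE.
case: ifP => _; first by rewrite sum2.
case: ifP => _; first by rewrite sum2.
by rewrite sum1.
Qed.

Lemma rot_orth k (a b : 'I_k) c s : a != b -> c ^+ 2 + s ^+ 2 = 1 ->
  (rotmx a b c s)^T *m rotmx a b c s = 1%:M.
Proof.
move=> ab cs; apply/matrixP => i j; rewrite !mxE.
under eq_bigr => l _ do rewrite mxE.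
rewrite (@colsum _ a b c s (fun l => rotmx a b c s l i)) // !rotE.
have ba : b != a by rewrite eq_sym.
have [eia|hia] := eqVneq i a; have [eib|hib] := eqVneq i b;
have [eja|hja] := eqVneq j a; have [ejb|hjb] := eqVneq j b;
try (by move: ab; rewrite -?eia -?eib -?eja -?ejb eqxx);
rewrite ?eia ?eib ?eja ?ejb;
rewrite ?eqxx ?(negbTE ab) ?(negbTE ba) ?(negbTE hia) ?(negbTE hib) ?(negbTE hja) ?(negbTE hjb) /=;
rewrite ?[a == _]eq_sym ?[b == _]eq_sym ?(negbTE hia) ?(negbTE hib) ?(negbTE hja) ?(negbTE hjb) /=;
rewrite ?eqxx ?mulr0 ?mul0r ?addr0 ?add0r ?mulr1 ?mul1r ?[j == i]eq_sym //; try lra.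
Qed.

Lemma tr_rot k (a b : 'I_k) c s (w dd : 'I_k -> R) : a != b -> c ^+ 2 + s ^+ 2 = 1 ->
  \tr (diagv w *m (rotmx a b c s)^T *m diagv dd *m rotmx a b c s) - \tr (diagv w *m diagv dd)
  = s ^+ 2 * (w a - w b) * (dd b - dd a).
Proof.
move=> ab cs.
have ba : b != a by rewrite eq_sym.
have hc : c^+2 = 1 - s^+2 by lra.
rewrite /diagv -!mulmxA mul_diag_mx mulmxA mul_mx_diag mul_diag_mx /mxtrace.
rewrite -sumrB.
transitivity (\sum_l w l * (if l == a then (s^+2 * (dd b - dd a)) else if l == b then (s^+2 * (dd a - dd b)) else 0)).
  apply: eq_bigr => i _; rewrite !mxE.
  under eq_bigr => l _ do rewrite !mxE.
  rewrite (@colsum _ a b c s (fun l => rotmx a b c s l i * dd l)) // !rotE.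
  have [->|hia] := eqVneq i a; rewrite ?eqxx ?(negbTE ab) ?(negbTE ba) /=.
    transitivity (w a * (c^+2 * dd a + s^+2 * dd b) - w a * dd a).
      by rewrite mulr1n; ring.
    by rewrite hc; ring.
  have [->|hib] := eqVneq i b; rewrite ?eqxx ?(negbTE ab) ?(negbTE ba) /=.
    transitivity (w b * (s^+2 * dd a + c^+2 * dd b) - w b * dd b).
      by rewrite mulr1n; ring.
    by rewrite hc; ring.
  rewrite ?(negbTE hia) ?(negbTE hib) ?eqxx.
 lra.
rewrite sum2 //; lra.
Qed.


Lemma bdiag2_mul m (A B : 'M[R]_m) : bdiag2 A *m bdiag2 B = bdiag2 (A *m B).
Proof. by rewrite /bdiag2 mulmx_block !mulmx0 !mul0mx !addr0 !add0r. Qed.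

Lemma bdiag2_tr m (A : 'M[R]_m) : (bdiag2 A)^T = bdiag2 A^T.
Proof. by rewrite /bdiag2 tr_block_mx !trmx0. Qed.

Lemma bdiag2_trace m (A : 'M[R]_m) : \tr (bdiag2 A) = \tr A + \tr A.
Proof. by rewrite /bdiag2 mxtrace_block. Qed.

Lemma bdiag2_1 m : bdiag2 (1%:M : 'M[R]_m) = 1%:M.
Proof. by rewrite /bdiag2 -scalar_mx_block. Qed.

Lemma feas_mul n k (X : 'M[R]_(n + n, k + k)) (P : 'M[R]_(k + k)) :
  feasible X -> symplectic P -> feasible (X *m P).
Proof.
rewrite /feasible /symplectic => hX hP.
by rewrite trmx_mul !mulmxA -(mulmxA P^T X^T) -(mulmxA P^T) hX.
Qed.

Lemma fobj_mul n k (M : 'M[R]_(n + n)) nu (X : 'M[R]_(n + n, k + k)) (P : 'M[R]_(k + k)) :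
  fobj M nu (X *m P) = \tr (bdiag2 (diagv nu) *m P^T *m (X^T *m M *m X) *m P).
Proof.
by rewrite /fobj trmx_mul !mulmxA.
Qed.

Lemma sympl_bdiag2 k (Q : 'M[R]_k) : Q^T *m Q = 1%:M -> symplectic (bdiag2 Q).
Proof.
move=> hQ; rewrite /symplectic /Jmx bdiag2_tr /bdiag2 !mulmx_block.
rewrite !mulmx0 !mul0mx !addr0 !add0r mulmx1 mulmxN mulmx1 mulNmx hQ !mul0mx.
reflexivity.
Qed.

Lemma sympl_scale k (t : R) : t != 0 ->
  symplectic (block_mx (t%:M : 'M[R]_k) 0 0 (t^-1)%:M).
Proof.
move=> t0; rewrite /symplectic /Jmx tr_block_mx !trmx0 !tr_scalar_mx !mulmx_block.
rewrite !mulmx0 !mul0mx !addr0 !add0r !mulmx1 !mulmxN !mulmx1 !mul_scalar_mx !mul0mx.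
rewrite scale_scalar_mx mulNmx -scalar_mxM mulfV // mulVf //.
Qed.


Lemma near_mul p q (X : 'M[R]_(p, q)) (P : 'M[R]_q) (e : R) : 0 <= e ->
  (forall l j, `|(P - 1%:M) l j| <= e) ->
  forall i j, `|(X *m P) i j - X i j| <= (\sum_i0 \sum_l `|X i0 l|) * e.
Proof.
move=> e0 hP i j.
have -> : (X *m P) i j - X i j = (X *m (P - 1%:M)) i j.
  by rewrite mulmxBr mulmx1 !mxE.
rewrite mxE; apply: le_trans (ler_norm_sum _ _ _) _.
apply: le_trans (_ : \sum_l `|X i l| * e <= _).
  by apply: ler_sum => l _; rewrite normrM ler_wpM2l.
rewrite -mulr_suml ler_wpM2r // (bigD1 i) //= lerDl.
by apply: sumr_ge0 => i0 _; apply: sumr_ge0.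
Qed.

Lemma block_bound m (A B C E : 'M[R]_m) (e : R) :
  (forall i j, `|A i j| <= e) -> (forall i j, `|B i j| <= e) ->
  (forall i j, `|C i j| <= e) -> (forall i j, `|E i j| <= e) ->
  forall i j, `|block_mx A B C E i j| <= e.
Proof.
move=> hA hB hC hE i j.
rewrite -(splitK i) -(splitK j).
case: (split i) => i'; case: (split j) => j' /=.
- by rewrite block_mxEul.
- by rewrite block_mxEur.
- by rewrite block_mxEdl.
- by rewrite block_mxEdr.
Qed.

Lemma scalar_bound m (x : R) (i j : 'I_m) : `|(x%:M : 'M[R]_m) i j| <= `|x|.
Proof. rewrite mxE; case: (i == j) => /=; by rewrite ?normr0 ?mulr1n. Qed.

Lemma scalarB_bound m (x y : R) (i j : 'I_m) : `|((x%:M - y%:M) : 'M[R]_m) i j| <= `|x - y|.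
Proof. rewrite !mxE; case: (i == j) => /=; by rewrite ?normr0 ?mulr1n ?subrr ?normr0. Qed.

Lemma rot_bound k (a b : 'I_k) c s e : a != b -> `|c - 1| <= e -> `|s| <= e -> 0 <= e ->
  forall l i, `|(rotmx a b c s - 1%:M) l i| <= e.
Proof.
move=> ab hc hs he l i; rewrite !mxE rotE.
have ba : b != a by rewrite eq_sym.
have [eia|hia] := eqVneq i a; have [eib|hib] := eqVneq i b;
have [ela|hla] := eqVneq l a; have [elb|hlb] := eqVneq l b;
try (by move: ab; rewrite -?eia -?eib -?ela -?elb eqxx);
rewrite ?eia ?eib ?ela ?elb;
rewrite ?eqxx ?(negbTE ab) ?(negbTE ba) ?(negbTE hia) ?(negbTE hib) ?(negbTE hla) ?(negbTE hlb) /=;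
rewrite ?[a == _]eq_sym ?[b == _]eq_sym ?(negbTE hia) ?(negbTE hib) ?(negbTE hla) ?(negbTE hlb) /=;
rewrite ?mulr1n ?mulr0n ?subr0 ?sub0r ?normrN ?subrr ?normr0 //.
Qed.

Lemma fobj_bdiag2 n k (M : 'M[R]_(n + n)) nu (X : 'M[R]_(n + n, k + k)) (Dd Q : 'M[R]_k) :
  X^T *m M *m X = bdiag2 Dd ->
  fobj M nu (X *m bdiag2 Q) = \tr (diagv nu *m Q^T *m Dd *m Q) + \tr (diagv nu *m Q^T *m Dd *m Q).
Proof. by move=> hG; rewrite fobj_mul hG bdiag2_tr !bdiag2_mul bdiag2_trace. Qed.

Lemma fobj_self n k (M : 'M[R]_(n + n)) nu (X : 'M[R]_(n + n, k + k)) (Dd : 'M[R]_k) :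
  X^T *m M *m X = bdiag2 Dd ->
  fobj M nu X = \tr (diagv nu *m Dd) + \tr (diagv nu *m Dd).
Proof.
move=> hG; have -> : X = X *m bdiag2 1%:M by rewrite bdiag2_1 mulmx1.
by rewrite (fobj_bdiag2 nu _ hG) trmx1 !mulmx1.
Qed.

Lemma fobj_scale n k (M : 'M[R]_(n + n)) nu (X : 'M[R]_(n + n, k + k)) (Dd : 'M[R]_k) (a : R) :
  X^T *m M *m X = bdiag2 Dd ->
  fobj M nu (X *m block_mx (a%:M : 'M[R]_k) 0 0 (a^-1)%:M) =
  (a * a + a^-1 * a^-1) * \tr (diagv nu *m Dd).
Proof.
move=> hG; rewrite fobj_mul hG tr_block_mx !trmx0 !tr_scalar_mx /bdiag2 !mulmx_block.
rewrite ?mulmx0 ?mul0mx ?addr0 ?add0r ?mulmx0 ?mul0mx ?addr0 ?add0r mxtrace_block.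
rewrite !mul_mx_scalar -!scalemxAl !mxtraceZ; ring.
Qed.

End P.
Unset Implicit Arguments.

Theorem proposition3p8 (R : realType) (n k : nat) (M : 'M[R]_(n + n))
  (nu : 'I_k -> R) (d : 'I_n -> R) (idx : 'I_k -> 'I_n)
  (X : 'M[R]_(n + n, k + k)) :
  (1 <= k)%N -> (k <= n)%N ->
  posdef_mx M ->
  (forall i, 0 < nu i) ->
  (forall i j : 'I_k, (i < j)%N -> nu i < nu j) ->
  symplectic_eigenvalues M d ->
  injective idx ->
  critical_point M nu X ->
  X^T *m M *m X = bdiag2 (diagv (fun i => d (idx i))) ->
  (exists alpha beta : 'I_k, (alpha < beta)%N /\ d (idx alpha) < d (idx beta)) ->
  ~ local_minimizer M nu X /\ saddle_point M nu X.
Proof.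
move=> k1 kn hM nupos numono [dpos _] _ hcrit hG [al [be [ab dab]]].
have hfeas : feasible X by case: hcrit.
set Dd := diagv (fun i => d (idx i)) in hG.
set B := \sum_i0 \sum_l `|X i0 l|.
have B0 : 0 <= B by apply: sumr_ge0 => i _; apply: sumr_ge0.
pose T := \tr (diagv nu *m Dd).
have T0 : 0 < T.
  rewrite /T /Dd /diagv mul_diag_mx /mxtrace (bigD1 al) //= !mxE eqxx mulr1n.
  have h1 : 0 < nu al * d (idx al) by rewrite mulr_gt0.
  have h2 : 0 <= \sum_(i | i != al) (\matrix_(i0, j) ((\row_i1 nu i1) 0 i0 *
       (diag_mx (\row_i1 d (idx i1))) i0 j)) i i.
    apply: sumr_ge0 => i _; rewrite !mxE eqxx mulr1n; apply: mulr_ge0; apply: ltW => //.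
  lra.
have nmin : ~ local_minimizer M nu X.
  move=> [_ [e e0 hmin]].
  have ab' : al != be by rewrite neq_ltn ab.
  pose t := e / (4 * (B + 1)).
  have t0 : 0 < t by rewrite /t divr_gt0 //; lra.
  have ht : t * (4 * (B + 1)) = e by rewrite /t mulfVK //; lra.
  pose u := 1 + t ^+ 2.
  have u0 : 0 < u by rewrite /u; nra.
  pose c := (1 - t ^+ 2) / u.
  pose s := 2 * t / u.
  have cs : c ^+ 2 + s ^+ 2 = 1.
    rewrite /c /s /u; field; exact: (lt0r_neq0 u0).
  have s0 : 0 < s by rewrite /s divr_gt0 //; lra.
  have hc : `|c - 1| <= 2 * t.
    have -> : c - 1 = - (2 * t ^+ 2 / u) by rewrite /c /u; field; exact: (lt0r_neq0 u0).
    rewrite normrN ger0_norm; last by rewrite divr_ge0 //; nra.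
    rewrite ler_pdivrMr //; rewrite /u; nra.
  have hs : `|s| <= 2 * t.
    rewrite (ger0_norm (ltW s0)) /s ler_pdivrMr //; rewrite /u; nra.
  set Q := rotmx al be c s.
  have hY := feas_mul hfeas (sympl_bdiag2 (rot_orth ab' cs)).
  have := hmin _ hY.
  have hnear : forall i j, `|(X *m bdiag2 Q) i j - X i j| < e.
    move=> i j.
    have t2 : 0 <= 2 * t by lra.
    have hb : forall l j, `|(bdiag2 Q - 1%:M) l j| <= 2 * t.
      rewrite -bdiag2_1 /bdiag2 opp_block_mx add_block_mx oppr0 addr0.
      apply: block_bound => ? ?; try by rewrite mxE normr0.
      - exact: rot_bound.
      - exact: rot_bound.
    apply: le_lt_trans (near_mul X t2 hb i j) _.
    have : B * (2 * t) <= (B + 1) * (2 * t) by rewrite ler_wpM2r // lerDl.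
    have -> : (B + 1) * (2 * t) = e / 2 by rewrite -ht; field.
    move=> hh; rewrite -/B; lra.
  move=> /(_ hnear).
  rewrite (fobj_bdiag2 nu Q hG) (fobj_self nu hG).
  have := tr_rot nu (fun i => d (idx i)) ab' cs.
  rewrite -/Q -/Dd -/T.
  have nab := numono _ _ ab.
  have hneg : s ^+ 2 * (nu al - nu be) * (d (idx be) - d (idx al)) < 0.
    rewrite -mulrA pmulr_rlt0 ?exprn_gt0 // pmulr_llt0 ?subr_gt0 //; lra.
  lra.
split => //; split => //; split => //.
move=> [_ [e e0 hmax]].
pose t := e / (4 * (B + 1)).
have t0 : 0 < t by rewrite /t divr_gt0 //; lra.
have ht : t * (4 * (B + 1)) = e by rewrite /t mulfVK //; lra.
pose a := 1 + t.
have a0 : a != 0 by rewrite /a; apply/eqP; lra.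
have hY := feas_mul hfeas (sympl_scale k a0).
have hnear : forall i j, `|(X *m block_mx (a%:M : 'M[R]_k) 0 0 (a^-1)%:M) i j - X i j| < e.
  move=> i j.
  have hb : forall l j : 'I_(k + k), `|(block_mx (a%:M : 'M[R]_k) 0 0 ((a^-1)%:M : 'M[R]_k) - 1%:M) l j| <= t.
    move=> l0 j0; rewrite -bdiag2_1 /bdiag2 opp_block_mx add_block_mx oppr0 addr0.
    apply: block_bound => ? ?; try by rewrite mxE normr0; apply: ltW.
    - apply: le_trans (scalarB_bound _ _ _ _) _; rewrite /a addrC addKr (ger0_norm (ltW t0)).
      by [].
    - apply: le_trans (scalarB_bound _ _ _ _) _.
      have ha : a^-1 - 1 = - (t / a) by rewrite /a; field; apply/eqP; lra.
      rewrite ha normrN ger0_norm; last by rewrite divr_ge0 ?ltW // /a; lra.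
      rewrite ler_pdivrMr /a; nra.
  apply: le_lt_trans (near_mul X (ltW t0) hb i j) _.
  have : B * t <= (B + 1) * t by rewrite ler_wpM2r ?lerDl // ltW.
  have -> : (B + 1) * t = e / 4 by rewrite -ht; field.
  move=> hh; rewrite -/B; lra.
have := hmax _ hY hnear.
rewrite (fobj_scale nu a hG) (fobj_self nu hG) -/T.
have hai : a^-1 < 1 by rewrite invf_lt1 /a; lra.
have hai0 : 0 < a^-1 by rewrite invr_gt0 /a; lra.
have haa : a * a^-1 = 1 by rewrite mulfV.
have : 2 < a * a + a^-1 * a^-1.
  have : 0 < (a - a^-1) ^+ 2 by rewrite exprn_gt0 // subr_gt0; rewrite /a; lra.
  nra.
nra.
Qed.
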